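(* Let $G$ be a connected graph with $n\ge 2$ vertices, $m$ edges and Randi\'c index $R=R(G)$. Then $$EE(G) > e^{m/R} + (n-1) - \frac{m}{R}.$$
   Context: All graphs are finite, simple and undirected. For a graph $G$ with adjacency matrix $A(G)$ having eigenvalues $\lambda_1\ge\lambda_2\ge\cdots\ge\lambda_n$, the Estrada index is $EE(G)=\sum_{i=1}^n e^{\lambda_i}$. Writing $d(i)$ for the degree of vertex $i$ and $\mathcal{E}(G)$ for the edge set, the general Randi\'c index is $R_\alpha(G)=\sum_{ij\in\mathcal{E}(G)}(d(i)d(j))^\alpha$ for real $\alpha$, and the Randi\'c index is $R=R_{-1/2}(G)=\sum_{ij\in\mathcal{E}(G)}(d(i)d(j))^{-1/2}$. *)

(* Defs.v *)
From Stdlib Require Import Reals Lra Relations.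
Open Scope R_scope.

Fixpoint fsum (n : nat) (f : nat -> R) : R :=
  match n with
  | O => 0
  | S k => fsum k f + f k
  end.

Definition simple_graph (n : nat) (adj : nat -> nat -> bool) : Prop :=
  (forall i j, (i < n)%nat -> (j < n)%nat -> adj i j = adj j i) /\
  (forall i, (i < n)%nat -> adj i i = false).

Definition edge (n : nat) (adj : nat -> nat -> bool) (i j : nat) : Prop :=
  (i < n)%nat /\ (j < n)%nat /\ adj i j = true.

Definition connected (n : nat) (adj : nat -> nat -> bool) : Prop :=
  forall i j, (i < n)%nat -> (j < n)%nat ->
    clos_refl_trans nat (edge n adj) i j.

Definition Aent (adj : nat -> nat -> bool) (i j : nat) : R :=
  if adj i j then 1 else 0.

Definition deg (n : nat) (adj : nat -> nat -> bool) (i : nat) : R :=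
  fsum n (fun j => Aent adj i j).

Definition num_edges (n : nat) (adj : nat -> nat -> bool) : R :=
  fsum n (fun i => fsum i (fun j => Aent adj j i)).

Definition randic_gen (alpha : R) (n : nat) (adj : nat -> nat -> bool) : R :=
  fsum n (fun i => fsum i (fun j =>
    if adj j i then Rpower (deg n adj i * deg n adj j) alpha else 0)).

Definition randic (n : nat) (adj : nat -> nat -> bool) : R :=
  randic_gen (-1/2) n adj.

(* lam 0, ..., lam (n-1) are the eigenvalues (with multiplicity) of the
   symmetric matrix A(G): there is an orthonormal basis v 0, ..., v (n-1)
   of R^n with A v_k = lam_k v_k (spectral decomposition). *)
Definition is_adj_spectrum (n : nat) (adj : nat -> nat -> bool)
    (lam : nat -> R) : Prop :=
  exists v : nat -> nat -> R,
    (forall k l, (k < n)%nat -> (l < n)%nat ->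
       fsum n (fun i => v k i * v l i) = if Nat.eqb k l then 1 else 0) /\
    (forall k i, (k < n)%nat -> (i < n)%nat ->
       fsum n (fun j => Aent adj i j * v k j) = lam k * v k i).

Definition estrada (n : nat) (lam : nat -> R) : R :=
  fsum n (fun k => exp (lam k)).

(* Main.v *)
Require Import Defs.
From Stdlib Require Import Reals Lra Lia Psatz Relations Classical.
Open Scope R_scope.


Lemma fsum_ext n f g : (forall i, (i < n)%nat -> f i = g i) -> fsum n f = fsum n g.
Proof.
  induction n; intros H; simpl; auto.
  rewrite IHn by (intros; apply H; lia). rewrite H by lia. auto.
Qed.

Lemma fsum_plus n f g : fsum n (fun i => f i + g i) = fsum n f + fsum n g.
Proof. induction n; simpl; [lra|rewrite IHn; lra]. Qed.

Lemma fsum_scal n c f : fsum n (fun i => c * f i) = c * fsum n f.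
Proof. induction n; simpl; [lra|rewrite IHn; lra]. Qed.

Lemma fsum_zero n : fsum n (fun _ => 0) = 0.
Proof. induction n; simpl; [lra|rewrite IHn; lra]. Qed.

Lemma fsum_const n c : fsum n (fun _ => c) = INR n * c.
Proof. induction n; simpl fsum; [simpl; lra|rewrite IHn, S_INR; lra]. Qed.

Lemma fsum_le n f g : (forall i, (i < n)%nat -> f i <= g i) -> fsum n f <= fsum n g.
Proof.
  induction n; intros H; simpl; [lra|].
  assert (fsum n f <= fsum n g) by (apply IHn; intros; apply H; lia).
  specialize (H n ltac:(lia)). lra.
Qed.

Lemma fsum_nonneg n f : (forall i, (i < n)%nat -> 0 <= f i) -> 0 <= fsum n f.
Proof. intros H. rewrite <- (fsum_zero n). apply fsum_le. auto. Qed.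

Lemma fsum_swap n m F :
  fsum n (fun i => fsum m (fun k => F i k)) = fsum m (fun k => fsum n (fun i => F i k)).
Proof.
  induction n; simpl.
  - rewrite fsum_zero; auto.
  - rewrite IHn, <- fsum_plus. auto.
Qed.

Lemma fsum_delta n i y : (i < n)%nat ->
  fsum n (fun j => (if Nat.eqb i j then 1 else 0) * y j) = y i.
Proof.
  induction n; intros Hi; [lia|]. simpl.
  destruct (Nat.eq_dec i n) as [->|ne].
  - rewrite Nat.eqb_refl.
    rewrite (fsum_ext n _ (fun _ => 0)).
    + rewrite fsum_zero; lra.
    + intros j Hj. destruct (Nat.eqb_spec n j); [lia|lra].
  - rewrite IHn by lia. destruct (Nat.eqb_spec i n); [lia|lra].
Qed.

Lemma fsum_one n f p : (forall i, (i < n)%nat -> 0 <= f i) -> (p < n)%nat -> f p <= fsum n f.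
Proof.
  induction n; intros H Hp; [lia|]. simpl.
  destruct (Nat.eq_dec p n) as [->|ne].
  - assert (0 <= fsum n f) by (apply fsum_nonneg; intros; apply H; lia). lra.
  - assert (f p <= fsum n f) by (apply IHn; [intros; apply H; lia|lia]).
    specialize (H n ltac:(lia)). lra.
Qed.

Lemma fsum_two n f p q : (forall i, (i < n)%nat -> 0 <= f i) -> (p < n)%nat -> (q < n)%nat ->
  p <> q -> f p + f q <= fsum n f.
Proof.
  induction n; intros H Hp Hq Hpq; [lia|]. simpl.
  assert (Hn: 0 <= f n) by (apply H; lia).
  destruct (Nat.eq_dec p n) as [->|ne].
  - assert (f q <= fsum n f) by (apply fsum_one; [intros; apply H; lia|lia]). lra.
  - destruct (Nat.eq_dec q n) as [->|ne2].
    + assert (f p <= fsum n f) by (apply fsum_one; [intros; apply H; lia|lia]). lra.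
    + assert (f p + f q <= fsum n f) by (apply IHn; auto; try lia; intros; apply H; lia). lra.
Qed.

Lemma argmax n (f : nat -> R) : (1 <= n)%nat ->
  exists p, (p < n)%nat /\ forall k, (k < n)%nat -> f k <= f p.
Proof.
  induction n; intros H; [lia|].
  destruct n.
  - exists 0%nat. split; [lia|]. intros k Hk. assert (k = 0%nat) by lia. subst. lra.
  - destruct IHn as [p [Hp Hmax]]; [lia|].
    destruct (Rle_dec (f (S n)) (f p)).
    + exists p. split; [lia|]. intros k Hk.
      destruct (Nat.eq_dec k (S n)); [subst; auto|apply Hmax; lia].
    + exists (S n). split; [lia|]. intros k Hk.
      destruct (Nat.eq_dec k (S n)); [subst; lra|]. specialize (Hmax k ltac:(lia)). lra.
Qed.

Lemma fsum_sym2 n F :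
  (forall i j, (i < n)%nat -> (j < n)%nat -> F i j = F j i) ->
  (forall i, (i < n)%nat -> F i i = 0) ->
  fsum n (fun i => fsum n (fun j => F i j)) = 2 * fsum n (fun i => fsum i (fun j => F i j)).
Proof.
  induction n; intros Hs Hd; simpl; [lra|].
  rewrite fsum_plus.
  rewrite IHn by (intros; auto with arith).
  rewrite (fsum_ext n (fun i => F i n) (fun i => F n i)) by (intros; apply Hs; lia).
  rewrite Hd by lia. lra.
Qed.


Lemma fsum_scal_r n c f : fsum n (fun i => f i * c) = fsum n f * c.
Proof. induction n; simpl; [lra|rewrite IHn; lra]. Qed.

Lemma fsum_minus n f g : fsum n (fun i => f i - g i) = fsum n f - fsum n g.
Proof. induction n; simpl; [lra|rewrite IHn; lra]. Qed.

Lemma lin3 n f g h a b :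
  fsum n (fun i => f i * a + (b * g i + h i)) = fsum n f * a + (b * fsum n g + fsum n h).
Proof. induction n; simpl; [lra|rewrite IHn; lra]. Qed.

Definition coef (n : nat) (v : nat -> nat -> R) (x : nat -> R) (k : nat) : R :=
  fsum n (fun i => v k i * x i).

Definition Cpl (n : nat) (v : nat -> nat -> R) : Prop :=
  forall i j, (i < n)%nat -> (j < n)%nat ->
       fsum n (fun k => v k i * v k j) = if Nat.eqb i j then 1 else 0.

Lemma recon n v y i : Cpl n v -> (i < n)%nat ->
  fsum n (fun k => v k i * coef n v y k) = y i.
Proof.
  intros C Hi. unfold coef.
  rewrite (fsum_ext n _ (fun k => fsum n (fun j => v k i * v k j * y j))).
  2:{ intros k Hk. rewrite <- fsum_scal. apply fsum_ext. intros; ring. }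
  rewrite fsum_swap.
  rewrite (fsum_ext n _ (fun j => (if Nat.eqb i j then 1 else 0) * y j)).
  - apply fsum_delta; auto.
  - intros j Hj. rewrite fsum_scal_r. rewrite C; auto.
Qed.

Lemma parseval n v x y : Cpl n v ->
  fsum n (fun i => x i * y i) = fsum n (fun k => coef n v x k * coef n v y k).
Proof.
  intros C.
  rewrite (fsum_ext n (fun k => coef n v x k * coef n v y k)
     (fun k => fsum n (fun i => v k i * x i * coef n v y k))).
  2:{ intros k Hk. unfold coef at 1. rewrite fsum_scal_r. auto. }
  rewrite <- fsum_swap. apply fsum_ext. intros i Hi.
  rewrite (fsum_ext n _ (fun k => x i * (v k i * coef n v y k))) by (intros; ring).
  rewrite fsum_scal, recon; auto.
Qed.

Definition Av (n : nat) (adj : nat -> nat -> bool) (x : nat -> R) (i : nat) : R :=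
  fsum n (fun j => Aent adj i j * x j).

Lemma coefA n adj v lam x k :
  (forall i j, (i < n)%nat -> (j < n)%nat -> Aent adj i j = Aent adj j i) ->
  (forall k i, (k < n)%nat -> (i < n)%nat ->
       fsum n (fun j => Aent adj i j * v k j) = lam k * v k i) ->
  (k < n)%nat ->
  coef n v (Av n adj x) k = lam k * coef n v x k.
Proof.
  intros Hs He Hk. unfold coef, Av.
  rewrite (fsum_ext n _ (fun i => fsum n (fun j => v k i * Aent adj i j * x j))).
  2:{ intros i Hi. rewrite <- fsum_scal. apply fsum_ext. intros; ring. }
  rewrite fsum_swap, <- fsum_scal. apply fsum_ext. intros j Hj.
  rewrite fsum_scal_r.
  rewrite (fsum_ext n _ (fun i => Aent adj j i * v k i)).
  - rewrite He by auto. ring.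
  - intros i Hi. rewrite Hs by auto. ring.
Qed.

Lemma quad n adj v lam x :
  Cpl n v ->
  (forall i j, (i < n)%nat -> (j < n)%nat -> Aent adj i j = Aent adj j i) ->
  (forall k i, (k < n)%nat -> (i < n)%nat ->
       fsum n (fun j => Aent adj i j * v k j) = lam k * v k i) ->
  fsum n (fun i => x i * Av n adj x i) = fsum n (fun k => lam k * (coef n v x k * coef n v x k)).
Proof.
  intros C Hs He. rewrite parseval with (v := v) by auto.
  apply fsum_ext. intros k Hk. rewrite coefA with (lam := lam) by auto. ring.
Qed.

Lemma trace0 n adj v lam :
  Cpl n v ->
  (forall k l, (k < n)%nat -> (l < n)%nat ->
       fsum n (fun i => v k i * v l i) = if Nat.eqb k l then 1 else 0) ->
  (forall i, (i < n)%nat -> Aent adj i i = 0) ->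
  (forall k i, (k < n)%nat -> (i < n)%nat ->
       fsum n (fun j => Aent adj i j * v k j) = lam k * v k i) ->
  fsum n lam = 0.
Proof.
  intros C Ho Hd He.
  rewrite (fsum_ext n lam (fun k => fsum n (fun i => fsum n (fun j => Aent adj i j * (v k i * v k j))))).
  2:{ intros k Hk.
      transitivity (fsum n (fun i => v k i * fsum n (fun j => Aent adj i j * v k j))).
      - rewrite (fsum_ext n _ (fun i => lam k * (v k i * v k i))).
        + rewrite fsum_scal, Ho, Nat.eqb_refl by auto. ring.
        + intros i Hi. rewrite He by auto. ring.
      - apply fsum_ext. intros i Hi. rewrite <- fsum_scal. apply fsum_ext. intros; ring. }
  rewrite fsum_swap.
  rewrite (fsum_ext n _ (fun i => fsum n (fun j => (if Nat.eqb i j then 1 else 0) * Aent adj i j))).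
  - rewrite (fsum_ext n _ (fun i => 0)).
    + apply fsum_zero.
    + intros i Hi. rewrite fsum_delta by auto. auto.
  - intros i Hi. rewrite fsum_swap. apply fsum_ext. intros j Hj.
    rewrite fsum_scal. rewrite C by auto. ring.
Qed.

Lemma allzero n adj v lam a b :
  Cpl n v ->
  (forall k i, (k < n)%nat -> (i < n)%nat ->
       fsum n (fun j => Aent adj i j * v k j) = lam k * v k i) ->
  (forall k, (k < n)%nat -> lam k = 0) ->
  (a < n)%nat -> (b < n)%nat -> Aent adj a b = 0.
Proof.
  intros C He Hz Ha Hb.
  rewrite <- (fsum_delta n b (fun l => Aent adj a l)) by auto.
  rewrite (fsum_ext n _ (fun l => fsum n (fun k => v k b * v k l * Aent adj a l))).
  2:{ intros l Hl. rewrite fsum_scal_r, C; auto. }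
  rewrite fsum_swap.
  rewrite (fsum_ext n _ (fun k => 0)).
  - apply fsum_zero.
  - intros k Hk. rewrite (fsum_ext n _ (fun l => v k b * (Aent adj a l * v k l))) by (intros; ring).
    rewrite fsum_scal, He, Hz by auto. ring.
Qed.

Lemma rt_edge n adj i j : clos_refl_trans nat (edge n adj) i j ->
  i = j \/ exists a b, edge n adj a b.
Proof.
  induction 1; auto.
  - right; eauto.
  - destruct IHclos_refl_trans1 as [->|?]; auto.
Qed.

Lemma expmono a b : 0 <= a -> a <= b -> exp a - a <= exp b - b.
Proof.
  intros Ha Hab.
  assert (E : exp b = exp a * exp (b - a)) by (rewrite <- exp_plus; f_equal; ring).
  pose proof (exp_ineq1_le (b - a)). pose proof (exp_ineq1_le a).
  pose proof (exp_pos a). nra.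
Qed.

Module Bridge.
From mathcomp Require Import all_boot all_algebra Rstruct.
Import GRing.Theory.
Local Open Scope ring_scope.

Lemma fsum_big n (f : nat -> R) : fsum n f = (\sum_(i < n) f i)%R.
Proof.
elim: n => [|n IH] /=; first by rewrite big_ord0.
by rewrite big_ord_recr /= IH.
Qed.

Lemma completeness n (v : nat -> nat -> R) :
  (forall k l, (k < n)%coq_nat -> (l < n)%coq_nat ->
       fsum n (fun i => v k i * v l i) = if Nat.eqb k l then 1 else 0) ->
  forall i j, (i < n)%coq_nat -> (j < n)%coq_nat ->
       fsum n (fun k => v k i * v k j) = if Nat.eqb i j then 1 else 0.
Proof.
move=> H i j Hi Hj.
pose V : 'M[R]_n := \matrix_(k, i) v k i.
have HV : (V *m V^T = 1%:M)%R.
  apply/matrixP => k l; rewrite !mxE.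
  rewrite -(_ : fsum n (fun i => v k i * v l i) = \sum_j (V k j * V^T j l))%R.
    rewrite H; try by apply/ltP.
    by case: (eqVneq k l) => [->|ne]; rewrite ?eqxx ?Nat.eqb_refl //;
      have -> : Nat.eqb k l = false by apply/Nat.eqb_neq => E; move/eqP: ne; apply; exact: ord_inj.
  by rewrite fsum_big; apply: eq_bigr => m _; rewrite !mxE.
have HV2 := mulmx1C HV.
pose i0 := Ordinal (introT ltP Hi). pose j0 := Ordinal (introT ltP Hj).
transitivity ((V^T *m V) i0 j0).
  rewrite fsum_big mxE; apply: eq_bigr => m _; by rewrite !mxE.
rewrite HV2 !mxE.
case: (eqVneq i0 j0) => [E|ne].
  have -> : i = j by move: E => /(congr1 val).
  by rewrite Nat.eqb_refl.
have -> : Nat.eqb i j = false.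
  apply/Nat.eqb_neq => E; move/eqP: ne; apply; exact: ord_inj.
by [].
Qed.
End Bridge.

Theorem mainTheorem1 (n : nat) (adj : nat -> nat -> bool) (lam : nat -> R) :
  (2 <= n)%nat ->
  simple_graph n adj ->
  connected n adj ->
  is_adj_spectrum n adj lam ->
  estrada n lam >
    exp (num_edges n adj / randic n adj) + (INR n - 1)
      - num_edges n adj / randic n adj.
Proof.
  intros Hn [Hsym Hirr] Hconn [v [Horth Heig]].
  assert (C : Cpl n v) by (intros i j Hi Hj; apply Bridge.completeness; auto).
  assert (As : forall i j, (i < n)%nat -> (j < n)%nat -> Aent adj i j = Aent adj j i)
    by (intros i j Hi Hj; unfold Aent; rewrite Hsym; auto).
  assert (Ad : forall i, (i < n)%nat -> Aent adj i i = 0)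
    by (intros i Hi; unfold Aent; rewrite Hirr; auto).
  assert (A01 : forall i j, 0 <= Aent adj i j) by (intros; unfold Aent; destruct adj; lra).
  destruct (rt_edge n adj 0 1 (Hconn 0%nat 1%nat ltac:(lia) ltac:(lia))) as [H01|[a [b [Ha [Hb Hab]]]]];
    [lia|].
  set (d := deg n adj).
  assert (dpos : forall i, 0 <= d i) by (intros; apply fsum_nonneg; auto).
  assert (dge1 : forall i j, (i < n)%nat -> (j < n)%nat -> adj i j = true -> 1 <= d i).
  { intros i j Hi Hj Hij. unfold d, deg.
    replace 1 with (Aent adj i j) by (unfold Aent; rewrite Hij; auto).
    apply fsum_one; auto. }
  set (m := num_edges n adj).
  assert (sumd : fsum n d = 2 * m).
  { unfold d, deg, m, num_edges. rewrite fsum_sym2 by auto.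
    f_equal. apply fsum_ext. intros i Hi. apply fsum_ext. intros j Hj. apply As; lia. }
  assert (mpos : 0 < m).
  { assert (1 <= d a) by (apply (dge1 a b); auto).
    assert (d a <= fsum n d) by (apply fsum_one; auto). lra. }
  set (Rr := randic n adj).
  set (Ssum := fsum n (fun i => fsum i (fun j => Aent adj j i * (sqrt (d i) * sqrt (d j))))).
  assert (CS : forall t, 0 <= Rr * (t * t) + (-2 * t * m + Ssum)).
  { intros t. unfold Rr, randic, randic_gen, m, num_edges, Ssum.
    rewrite <- lin3. apply fsum_nonneg. intros i Hi.
    rewrite <- lin3. apply fsum_nonneg. intros j Hj.
    unfold Aent. destruct (adj j i) eqn:Eji; [|lra].
    assert (1 <= d i) by (apply (dge1 i j); try lia; rewrite Hsym by lia; auto).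
    assert (1 <= d j) by (apply (dge1 j i); auto; lia).
    fold (d i) (d j).
    set (w := d i * d j).
    assert (wpos : 0 < w) by (unfold w; nra).
    assert (Hq : sqrt (d i) * sqrt (d j) = sqrt w) by (unfold w; rewrite sqrt_mult; lra).
    assert (Hpq : Rpower w (-1/2) * sqrt w = 1).
    { rewrite <- Rpower_sqrt by auto. rewrite <- Rpower_plus.
      replace (-1/2 + /2) with 0 by field. apply Rpower_O; auto. }
    assert (pp : 0 < Rpower w (-1/2)) by (unfold Rpower; apply exp_pos).
    rewrite Hq. set (p := Rpower w (-1/2)) in *.
    assert (E : p * (p * (t * t) + (-2 * t * 1 + 1 * sqrt w)) = (p*t-1)*(p*t-1))
      by (transitivity ((p*t-1)*(p*t-1) + (p * sqrt w - 1)); [ring| rewrite Hpq; ring]).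
    apply Rmult_le_reg_l with (r := p); auto. rewrite E, Rmult_0_r.
    apply Rle_0_sqr. }
  assert (Rnn : 0 <= Rr).
  { unfold Rr, randic, randic_gen. apply fsum_nonneg. intros i Hi. apply fsum_nonneg.
    intros j Hj. destruct (adj j i); [unfold Rpower; left; apply exp_pos|lra]. }
  assert (Rpos : 0 < Rr).
  { destruct Rnn as [|E]; auto. exfalso.
    specialize (CS ((Ssum + 1) / (2 * m))). rewrite <- E in CS.
    replace (0 * ((Ssum + 1) / (2 * m) * ((Ssum + 1) / (2 * m))) +
       (-2 * ((Ssum + 1) / (2 * m)) * m + Ssum)) with (-1) in CS by (field; lra). lra. }
  assert (SR : m * m / Rr <= Ssum).
  { specialize (CS (m / Rr)).
    replace (Rr * (m / Rr * (m / Rr)) + (-2 * (m / Rr) * m + Ssum)) with (Ssum - m * m / Rr) in CS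
      by (field; lra). lra. }
  destruct (argmax n lam ltac:(lia)) as [p [Hp Hmax]].
  set (L := lam p).
  set (x := fun i => sqrt (d i)).
  assert (Hq := quad n adj v lam x C As Heig).
  assert (xAx : fsum n (fun i => x i * Av n adj x i) = 2 * Ssum).
  { unfold Av, Ssum.
    rewrite (fsum_ext n _ (fun i => fsum n (fun j => Aent adj j i * (x i * x j)))).
    - rewrite fsum_sym2.
      + f_equal.
      + intros i j Hi Hj. rewrite As by auto. ring.
      + intros i Hi. rewrite Ad by auto. ring.
    - intros i Hi. rewrite <- fsum_scal. apply fsum_ext. intros j Hj. rewrite As by auto. ring. }
  assert (xx : fsum n (fun i => x i * x i) = 2 * m).
  { rewrite <- sumd. apply fsum_ext. intros i Hi. unfold x. apply sqrt_sqrt. auto. }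
  assert (Ray : 2 * Ssum <= L * (2 * m)).
  { rewrite <- xAx, Hq, <- xx, (parseval n v x x C), <- fsum_scal.
    apply fsum_le. intros k Hk. specialize (Hmax k Hk).
    assert (0 <= coef n v x k * coef n v x k) by nra. fold L in Hmax. nra. }
  assert (Lbig : m / Rr <= L).
  { apply Rmult_le_reg_r with (r := 2 * m); [lra|].
    replace (m / Rr * (2 * m)) with (2 * (m * m / Rr)) by (field; lra). lra. }
  assert (mR0 : 0 <= m / Rr) by (unfold Rdiv; apply Rmult_le_pos; [lra|left; apply Rinv_0_lt_compat; auto]).
  assert (Htr := trace0 n adj v lam C Horth Ad Heig).
  set (g := fun k => exp (lam k) - (1 + lam k)).
  assert (gnn : forall k, 0 <= g k) by (intros; unfold g; pose proof (exp_ineq1_le (lam k)); lra).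
  assert (sumg : fsum n g = estrada n lam - INR n).
  { unfold g, estrada. rewrite fsum_minus, fsum_plus, Htr, fsum_const. ring. }
  assert (Hgp : g p < fsum n g).
  { destruct (classic (exists q, (q < n)%nat /\ q <> p /\ lam q <> 0)) as [[q [Hq1 [Hq2 Hq3]]]|Hno].
    - pose proof (fsum_two n g p q (fun i _ => gnn i) Hp Hq1 (fun e => Hq2 (eq_sym e))).
      assert (0 < g q) by (unfold g; pose proof (exp_ineq1 (lam q) Hq3); lra). lra.
    - exfalso.
      assert (Hz : forall q, (q < n)%nat -> q <> p -> lam q = 0).
      { intros q Hq1 Hq2. destruct (Req_dec (lam q) 0); auto. exfalso; apply Hno; eauto. }
      assert (Lz : lam p = 0).
      { rewrite <- Htr. rewrite <- (fsum_delta n p lam) by auto. apply fsum_ext.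
        intros k Hk. destruct (Nat.eqb_spec p k); [subst; ring|rewrite Hz; auto; ring]. }
      assert (Hz2 : forall k, (k < n)%nat -> lam k = 0).
      { intros k Hk. destruct (Nat.eq_dec k p); [subst; auto|auto]. }
      pose proof (allzero n adj v lam a b C Heig Hz2 Ha Hb).
      unfold Aent in H. rewrite Hab in H. lra. }
  pose proof (expmono (m / Rr) L mR0 Lbig).
  assert (Eg : g p = exp L - (1 + L)) by reflexivity. rewrite Eg in Hgp. lra.
Qed.
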